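(* Let $S$ be a finite symmetric generating set of $H(\mathbb{Z})$ and $d_{CC}$ the CC metric on $H(\mathbb{R})$ induced by $\|\cdot\|_L$, where $Q$ is the convex hull of $\pi(S)$ and $L=\partial Q$. There is a constant $C$ such that for every $\epsilon>0$ there is $n_0$ with the following property: for every ${\sf x}\in H(\mathbb{Z})$ with $n=|{\sf x}|_S\ge n_0$, every discrete geodesic from ${\sf 0}$ to ${\sf x}$ is $\epsilon$-linearly tracked by an admissible path whose length $\ell$ satisfies $|\ell-n|\le C\sqrt n$.
   Context: Exponential coordinates on $H(\mathbb{R})$: $(x,y,z)(x',y',z')=(x+x',y+y',z+z'+\tfrac12(xy'-yx'))$, ${\sf 0}=(0,0,0)$; $H(\mathbb{Z})=\{(x,y,z):x,y\in\mathbb{Z},z\in\mathbb{Z}+\epsilon(x,y)\}$ with $\epsilon=1/2$ if $x,y$ both odd, else $0$; $\pi(x,y,z)=(x,y)$. $|\cdot|_S$ is word length. An admissible path satisfies $\gamma_3'=\tfrac12(\gamma_1\gamma_2'-\gamma_2\gamma_1')$; its length is the $\|\cdot\|_L$-length of its projection by $\pi$, where $\|\cdot\|_L$ is the norm with unit ball $Q$; $d_{CC}$ is the induced path metric. A discrete geodesic from ${\sf 0}$ to ${\sf x}$ is the sequence ${\sf x}_0={\sf 0}$, ${\sf x}_i={\sf a}_1\cdots{\sf a}_i$ ($i\le n$) for a minimal-length spelling ${\sf x}={\sf a}_1\cdots{\sf a}_n$ with ${\sf a}_i\in S$. It is $\epsilon$-linearly tracked by an admissible path $\alpha$ if $\alpha$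 has the same endpoints and every ${\sf x}_i$ lies within $d_{CC}$-distance $\epsilon n$ of $\alpha$. *)

(* Defs.v *)
From Stdlib Require Import Reals Lra List ZArith ClassicalEpsilon.
Open Scope R_scope.

(** * Heisenberg group H(R) in exponential coordinates *)
Record H3 := mkH { hx : R; hy : R; hz : R }.

Definition hmul (p q : H3) : H3 :=
  mkH (hx p + hx q) (hy p + hy q)
      (hz p + hz q + / 2 * (hx p * hy q - hy p * hx q)).

Definition horigin : H3 := mkH 0 0 0.

Definition hinv (p : H3) : H3 := mkH (- hx p) (- hy p) (- hz p).

Definition inHZ (p : H3) : Prop :=
  exists a b c : Z, hx p = IZR a /\ hy p = IZR b /\
    hz p = IZR c + (if andb (Z.odd a) (Z.odd b) then / 2 else 0).

Definition wprod (w : list H3) : H3 := fold_right hmul horigin w.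

Definition spells (Sg : list H3) (x : H3) (w : list H3) : Prop :=
  (forall s, In s w -> In s Sg) /\ wprod w = x.

Definition generates (Sg : list H3) : Prop :=
  forall x, inHZ x -> exists w, spells Sg x w.

Definition word_length (Sg : list H3) (x : H3) (n : nat) : Prop :=
  (exists w, spells Sg x w /\ length w = n) /\
  (forall w, spells Sg x w -> (n <= length w)%nat).

(** w is a minimal-length spelling of x (a discrete geodesic 0 -> x);
    its i-th vertex is wprod (firstn i w). *)
Definition min_spelling (Sg : list H3) (x : H3) (w : list H3) : Prop :=
  spells Sg x w /\ word_length Sg x (length w).

Definition is_glb (E : R -> Prop) (l : R) : Prop :=
  (forall y, E y -> l <= y) /\ (forall b, (forall y, E y -> b <= y) -> b <= l).

Definition Rinf (E : R -> Prop) : R := epsilon (inhabits 0) (is_glb E).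
Definition Rsup (E : R -> Prop) : R := epsilon (inhabits 0) (is_lub E).

Fixpoint rsum (f : nat -> R) (k : nat) : R :=
  match k with O => 0 | S m => rsum f m + f m end.

(** * The norm ||.||_L whose unit ball is Q = conv(pi(S)) *)
Definition inQ (Sg : list H3) (v1 v2 : R) : Prop :=
  exists lam : nat -> R,
    (forall i, 0 <= lam i) /\ rsum lam (length Sg) = 1 /\
    v1 = rsum (fun i => lam i * hx (nth i Sg horigin)) (length Sg) /\
    v2 = rsum (fun i => lam i * hy (nth i Sg horigin)) (length Sg).

Definition normL (Sg : list H3) (v1 v2 : R) : R :=
  Rinf (fun t => 0 <= t /\ exists q1 q2, inQ Sg q1 q2 /\ v1 = t * q1 /\ v2 = t * q2).

Definition partition (a b : R) (k : nat) (p : nat -> R) : Prop :=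
  p O = a /\ p k = b /\ (forall i, (i < k)%nat -> p i <= p (S i)).

Definition mesh_lt (k : nat) (p : nat -> R) (d : R) : Prop :=
  forall i, (i < k)%nat -> p (S i) - p i < d.

Definition path_continuous (g : R -> H3) : Prop :=
  forall t, 0 <= t <= 1 -> forall e, e > 0 -> exists d, d > 0 /\
    forall s, 0 <= s <= 1 -> Rabs (s - t) < d ->
      Rabs (hx (g s) - hx (g t)) < e /\ Rabs (hy (g s) - hy (g t)) < e /\
      Rabs (hz (g s) - hz (g t)) < e.

Definition var_sum (Sg : list H3) (g : R -> H3) (k : nat) (p : nat -> R) : R :=
  rsum (fun i => normL Sg (hx (g (p (S i))) - hx (g (p i)))
                         (hy (g (p (S i))) - hy (g (p i)))) k.

Definition length_set (Sg : list H3) (g : R -> H3) (v : R) : Prop :=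
  exists k p, partition 0 1 k p /\ v = var_sum Sg g k p.

Definition path_length (Sg : list H3) (g : R -> H3) : R := Rsup (length_set Sg g).

(** Riemann-Stieltjes sum for (1/2) int (g1 dg2 - g2 dg1) *)
Definition area_sum (g : R -> H3) (k : nat) (p : nat -> R) : R :=
  rsum (fun i => / 2 * (hx (g (p i)) * (hy (g (p (S i))) - hy (g (p i)))
                       - hy (g (p i)) * (hx (g (p (S i))) - hx (g (p i))))) k.

(** admissible (horizontal, rectifiable, continuous) path on [0,1]:
    g3' = (1/2)(g1 g2' - g2 g1') in integrated (Riemann-Stieltjes) form *)
Definition admissible (Sg : list H3) (g : R -> H3) : Prop :=
  path_continuous g /\
  (exists M, forall v, length_set Sg g v -> v <= M) /\
  (forall t, 0 <= t <= 1 -> forall e, e > 0 -> exists d, d > 0 /\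
     forall k p, partition 0 t k p -> mesh_lt k p d ->
       Rabs (hz (g t) - hz (g 0) - area_sum g k p) < e).

Definition dCC (Sg : list H3) (p q : H3) : R :=
  Rinf (fun l => exists g, admissible Sg g /\ g 0 = p /\ g 1 = q /\
                           l = path_length Sg g).

Definition dist_to_path (Sg : list H3) (x : H3) (g : R -> H3) : R :=
  Rinf (fun d => exists t, 0 <= t <= 1 /\ d = dCC Sg x (g t)).

Definition lin_tracked (Sg : list H3) (eps : R) (w : list H3) (x : H3)
    (g : R -> H3) : Prop :=
  admissible Sg g /\ g 0 = horigin /\ g 1 = x /\
  forall i, (i <= length w)%nat ->
    dist_to_path Sg (wprod (firstn i w)) g <= eps * INR (length w).

(* Main.v *)
From Stdlib Require Import Reals Lra List ZArith ClassicalEpsilon Classical Lia Psatz.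
Require Import Defs.
Open Scope R_scope.

Lemma rsum_ext f g k : (forall i, (i < k)%nat -> f i = g i) -> rsum f k = rsum g k.
Proof. induction k; simpl; intros H; auto. rewrite IHk by (intros; apply H; lia). rewrite H by lia; auto. Qed.

Lemma rsum_plus f g k : rsum (fun i => f i + g i) k = rsum f k + rsum g k.
Proof. induction k; simpl; [lra|]. rewrite IHk; lra. Qed.

Lemma rsum_minus f g k : rsum (fun i => f i - g i) k = rsum f k - rsum g k.
Proof. induction k; simpl; [lra|]. rewrite IHk; lra. Qed.

Lemma rsum_scal c f k : rsum (fun i => c * f i) k = c * rsum f k.
Proof. induction k; simpl; [lra|]. rewrite IHk; lra. Qed.

Lemma rsum_le f g k : (forall i, (i < k)%nat -> f i <= g i) -> rsum f k <= rsum g k.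
Proof. induction k; simpl; intros H; [lra|]. assert (f k <= g k) by (apply H; lia).
  assert (rsum f k <= rsum g k) by (apply IHk; intros; apply H; lia). lra. Qed.

Lemma rsum_nonneg f k : (forall i, (i < k)%nat -> 0 <= f i) -> 0 <= rsum f k.
Proof. intros H. replace 0 with (rsum (fun _ => 0) k). apply rsum_le; auto.
  clear H; induction k; simpl; auto; lra. Qed.

Lemma rsum_app f k1 k2 : rsum f (k1 + k2) = rsum f k1 + rsum (fun j => f (k1 + j)%nat) k2.
Proof. induction k2; simpl. rewrite Nat.add_0_r; lra. rewrite Nat.add_succ_r; simpl. rewrite IHk2; lra. Qed.

Lemma rsum_tele a k : rsum (fun i => a (S i) - a i) k = a k - a O.
Proof. induction k; simpl; [lra|]. rewrite IHk; lra. Qed.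

Lemma rsum_abs f k : Rabs (rsum f k) <= rsum (fun i => Rabs (f i)) k.
Proof. induction k; simpl. rewrite Rabs_R0; lra.
  eapply Rle_trans. apply Rabs_triang. lra. Qed.

Lemma rsum_term_le f k j : (forall i, 0 <= f i) -> (j < k)%nat -> f j <= rsum f k.
Proof. induction k; intros H Hj; [lia|]. simpl.
  destruct (Nat.eq_dec j k). subst. assert (0 <= rsum f k) by (apply rsum_nonneg; auto). lra.
  assert (f j <= rsum f k) by (apply IHk; auto; lia). specialize (H k). lra. Qed.

Lemma rsum_indic j k x : (j < k)%nat ->
  rsum (fun i => (if Nat.eq_dec i j then 1 else 0) * x i) k = x j.
Proof. induction k; intros Hj; [lia|]. simpl.
  destruct (Nat.eq_dec k j). subst.
  rewrite (rsum_ext _ (fun _ => 0)). assert (forall m, rsum (fun _ => 0) m = 0) as Z.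
  { induction m; simpl; auto; lra. } rewrite Z; lra.
  intros i Hi. destruct (Nat.eq_dec i j); [lia|lra].
  rewrite IHk by lia. lra. Qed.

Lemma rsum_zero_nonneg mu k : (forall i, 0 <= mu i) -> rsum mu k = 0 ->
  forall i, (i < k)%nat -> mu i = 0.
Proof. intros H Hs i Hi. assert (mu i <= rsum mu k) by (apply rsum_term_le; auto).
  specialize (H i). lra. Qed.

Lemma rsum_zero k : rsum (fun _ => 0) k = 0.
Proof. induction k; simpl; auto; lra. Qed.

Lemma glb_exists (E : R -> Prop) m : (exists y, E y) -> (forall y, E y -> m <= y) ->
  exists l, is_glb E l.
Proof. intros [y0 Hy0] Hm.
  destruct (completeness (fun x => E (- x))) as [u [Hu1 Hu2]].
  { exists (- m). intros x Hx. specialize (Hm _ Hx). lra. }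
  { exists (- y0). rewrite Ropp_involutive. auto. }
  exists (- u). split.
  - intros y Hy. assert (- y <= u). { apply Hu1. rewrite Ropp_involutive; auto. } lra.
  - intros b Hb. assert (u <= - b). { apply Hu2. intros x Hx. specialize (Hb _ Hx). lra. } lra.
Qed.

Lemma Rinf_spec (E : R -> Prop) m : (exists y, E y) -> (forall y, E y -> m <= y) ->
  is_glb E (Rinf E).
Proof. intros H1 H2. unfold Rinf. apply epsilon_spec. eapply glb_exists; eauto. Qed.

Lemma Rsup_spec (E : R -> Prop) : (exists y, E y) -> (exists M, forall y, E y -> y <= M) ->
  is_lub E (Rsup E).
Proof. intros H1 [M HM]. unfold Rsup. apply epsilon_spec.
  destruct (completeness E) as [u Hu]; eauto. exists M; intros x Hx; auto. Qed.

Lemma lub_unique E a b : is_lub E a -> is_lub E b -> a = b.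
Proof. intros [A1 A2] [B1 B2]. apply Rle_antisym; auto. Qed.

Lemma glb_le E l y : is_glb E l -> E y -> l <= y.
Proof. intros [H _] Hy; auto. Qed.

Lemma glb_approx E l e : is_glb E l -> e > 0 -> exists y, E y /\ y < l + e.
Proof. intros [H1 H2] He. apply NNPP; intro Hn.
  assert (l + e <= l). { apply H2. intros y Hy. destruct (Rlt_or_le y (l+e)); auto.
    exfalso; apply Hn; eauto. } lra. Qed.

Definition Tm (S : list H3) (a b y : R) : Prop :=
  exists mu : nat -> R, (forall i, 0 <= mu i) /\ rsum mu (length S) = y /\
    a = rsum (fun i => mu i * hx (nth i S horigin)) (length S) /\
    b = rsum (fun i => mu i * hy (nth i S horigin)) (length S).

Lemma Tm_nonneg S a b y : Tm S a b y -> 0 <= y.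
Proof. intros [mu [H1 [H2 _]]]. subst. apply rsum_nonneg; auto. Qed.

Lemma Tm_add S a b y a' b' y' : Tm S a b y -> Tm S a' b' y' -> Tm S (a + a') (b + b') (y + y').
Proof. intros [mu [H1 [H2 [H3 H4]]]] [nu [G1 [G2 [G3 G4]]]].
  exists (fun i => mu i + nu i). repeat split.
  - intros i; specialize (H1 i); specialize (G1 i); lra.
  - rewrite rsum_plus; subst; auto.
  - subst. rewrite <- rsum_plus. apply rsum_ext; intros; ring.
  - subst. rewrite <- rsum_plus. apply rsum_ext; intros; ring.
Qed.

Lemma Tm_scale S a b y c : 0 <= c -> Tm S a b y -> Tm S (c * a) (c * b) (c * y).
Proof. intros Hc [mu [H1 [H2 [H3 H4]]]]. exists (fun i => c * mu i). repeat split.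
  - intros i; specialize (H1 i); nra.
  - rewrite rsum_scal; subst; auto.
  - subst. rewrite <- rsum_scal. apply rsum_ext; intros; ring.
  - subst. rewrite <- rsum_scal. apply rsum_ext; intros; ring.
Qed.

Lemma Tm_zero S : Tm S 0 0 0.
Proof. exists (fun _ => 0). repeat split; intros; try lra.
  apply rsum_zero. all: symmetry; rewrite (rsum_ext _ (fun _ => 0)); [apply rsum_zero| intros; ring]. Qed.

Lemma Tm_S S s : In s S -> Tm S (hx s) (hy s) 1.
Proof. intros Hs. destruct (In_nth S s horigin Hs) as [j [Hj Hn]].
  exists (fun i => if Nat.eq_dec i j then 1 else 0). repeat split.
  - intros i; destruct (Nat.eq_dec i j); lra.
  - rewrite (rsum_ext _ (fun i => (if Nat.eq_dec i j then 1 else 0) * 1)).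
    rewrite rsum_indic; auto. intros; ring.
  - rewrite rsum_indic; auto. rewrite Hn; auto.
  - rewrite rsum_indic; auto. rewrite Hn; auto.
Qed.

Definition normT (S : list H3) (a b t : R) : Prop :=
  0 <= t /\ exists q1 q2, inQ S q1 q2 /\ a = t * q1 /\ b = t * q2.

Lemma normT_Tm S a b t : normT S a b t -> Tm S a b t.
Proof. intros [Ht [q1 [q2 [[lam [L1 [L2 [L3 L4]]]] [Ha Hb]]]]].
  exists (fun i => t * lam i). repeat split.
  - intros i; specialize (L1 i); nra.
  - rewrite rsum_scal, L2; ring.
  - rewrite Ha, L3, <- rsum_scal. apply rsum_ext; intros; ring.
  - rewrite Hb, L4, <- rsum_scal. apply rsum_ext; intros; ring.
Qed.

Lemma Tm_normT S a b t : S <> nil -> Tm S a b t -> normT S a b t.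
Proof. intros HS HT. pose proof (Tm_nonneg _ _ _ _ HT) as Ht.
  destruct HT as [mu [H1 [H2 [H3 H4]]]]. split; auto.
  destruct (Req_dec t 0) as [E|E].
  - assert (Z : forall i, (i < length S)%nat -> mu i = 0) by (apply rsum_zero_nonneg; auto; lra).
    assert (a = 0). { rewrite H3. rewrite (rsum_ext _ (fun _ => 0)). apply rsum_zero. intros i Hi; rewrite Z; auto; ring. }
    assert (b = 0). { rewrite H4. rewrite (rsum_ext _ (fun _ => 0)). apply rsum_zero. intros i Hi; rewrite Z; auto; ring. }
    assert (Hl : (0 < length S)%nat) by (destruct S; simpl; [congruence|lia]).
    exists (hx (nth 0 S horigin)), (hy (nth 0 S horigin)).
    split; [|split; rewrite E; [rewrite H|rewrite H0]; ring].
    exists (fun i => if Nat.eq_dec i 0 then 1 else 0). repeat split.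
    + intros i; destruct (Nat.eq_dec i 0); lra.
    + rewrite (rsum_ext _ (fun i => (if Nat.eq_dec i 0 then 1 else 0) * 1)).
      rewrite rsum_indic; auto. intros; ring.
    + rewrite rsum_indic; auto.
    + rewrite rsum_indic; auto.
  - exists (a / t), (b / t). repeat split; try (field; auto).
    exists (fun i => mu i / t). repeat split.
    + intros i; specialize (H1 i). apply Rmult_le_pos; auto. apply Rlt_le, Rinv_0_lt_compat; lra.
    + unfold Rdiv. rewrite (rsum_ext _ (fun i => / t * mu i)) by (intros; ring).
      rewrite rsum_scal, H2. field; auto.
    + rewrite H3. unfold Rdiv. rewrite Rmult_comm, <- rsum_scal. apply rsum_ext; intros; ring.
    + rewrite H4. unfold Rdiv. rewrite Rmult_comm, <- rsum_scal. apply rsum_ext; intros; ring.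
Qed.

Lemma normL_glb S : S <> nil -> (forall a b, exists y, Tm S a b y) ->
  forall a b, is_glb (Tm S a b) (normL S a b).
Proof. intros HS HA a b. unfold normL.
  assert (G : is_glb (normT S a b) (Rinf (normT S a b))).
  { apply Rinf_spec with 0. destruct (HA a b) as [y Hy]. exists y. apply Tm_normT; auto.
    intros y [Hy _]; auto. }
  fold (normT S a b). destruct G as [G1 G2]. split.
  - intros y Hy. apply G1. apply Tm_normT; auto.
  - intros c Hc. apply G2. intros y Hy. apply Hc. apply normT_Tm; auto.
Qed.

Definition NGood S := forall a b, is_glb (Tm S a b) (normL S a b).

Lemma normL_nonneg S a b : NGood S -> 0 <= normL S a b.
Proof. intros NG. destruct (NG a b) as [_ H]. apply H. intros y Hy. eapply Tm_nonneg; eauto. Qed.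

Lemma normL_le S a b y : NGood S -> Tm S a b y -> normL S a b <= y.
Proof. intros NG H. destruct (NG a b) as [H1 _]. auto. Qed.

Lemma normL_ge S a b c : NGood S -> (forall y, Tm S a b y -> c <= y) -> c <= normL S a b.
Proof. intros NG H. destruct (NG a b) as [_ H2]. auto. Qed.

Lemma normL_tri S a1 a2 b1 b2 : NGood S ->
  normL S (a1 + b1) (a2 + b2) <= normL S a1 a2 + normL S b1 b2.
Proof. intros NG. destruct (Rle_or_lt (normL S (a1 + b1) (a2 + b2)) (normL S a1 a2 + normL S b1 b2)); auto.
  set (e := (normL S (a1 + b1) (a2 + b2) - (normL S a1 a2 + normL S b1 b2)) / 2).
  destruct (glb_approx _ _ e (NG a1 a2)) as [y [Hy Hy']]. unfold e; lra.
  destruct (glb_approx _ _ e (NG b1 b2)) as [z [Hz Hz']]. unfold e; lra.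
  pose proof (normL_le _ _ _ _ NG (Tm_add _ _ _ _ _ _ _ Hy Hz)). unfold e in *; lra.
Qed.

Lemma normL_zero S : NGood S -> normL S 0 0 = 0.
Proof. intros NG. apply Rle_antisym. apply normL_le; auto. apply Tm_zero. apply normL_nonneg; auto. Qed.

Lemma normL_hom S c a b : NGood S -> 0 <= c -> normL S (c * a) (c * b) = c * normL S a b.
Proof. intros NG Hc. destruct (Req_dec c 0) as [E|E].
  - subst. rewrite !Rmult_0_l. apply normL_zero; auto.
  - apply Rle_antisym.
    + assert (normL S (c * a) (c * b) / c <= normL S a b).
      { apply normL_ge; auto. intros y Hy.
        assert (normL S (c*a) (c*b) <= c * y) by (apply normL_le; auto; apply Tm_scale; auto).
        apply (Rmult_le_reg_l c). lra. replace (c * (normL S (c * a) (c * b) / c)) with (normL S (c*a) (c*b)) by (field; auto). lra. }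
      apply (Rmult_le_reg_l (/ c)). apply Rinv_0_lt_compat; lra.
      replace (/ c * normL S (c * a) (c * b)) with (normL S (c * a) (c * b) / c) by (unfold Rdiv; ring).
      replace (/ c * (c * normL S a b)) with (normL S a b) by (field; auto). auto.
    + apply normL_ge; auto. intros y Hy.
      assert (Hi : 0 <= / c) by (apply Rlt_le, Rinv_0_lt_compat; lra).
      pose proof (Tm_scale _ _ _ _ _ Hi Hy) as H.
      replace (/ c * (c * a)) with a in H by (field; auto).
      replace (/ c * (c * b)) with b in H by (field; auto).
      pose proof (normL_le _ _ _ _ NG H).
      apply (Rmult_le_reg_l (/ c)). apply Rinv_0_lt_compat; lra.
      replace (/ c * (c * normL S a b)) with (normL S a b) by (field; auto). auto.
Qed.

Definition Bnd S := rsum (fun i => Rabs (hx (nth i S horigin)) + Rabs (hy (nth i S horigin))) (length S) + 1.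

Lemma Bnd_pos S : 0 < Bnd S.
Proof. unfold Bnd. assert (0 <= rsum (fun i => Rabs (hx (nth i S horigin)) + Rabs (hy (nth i S horigin))) (length S)).
  apply rsum_nonneg; intros; pose proof (Rabs_pos (hx (nth i S horigin))); pose proof (Rabs_pos (hy (nth i S horigin))); lra. lra. Qed.

Lemma normL_lower S a b : NGood S -> (Rabs a + Rabs b) / Bnd S <= normL S a b.
Proof. intros NG. pose proof (Bnd_pos S) as HB. apply normL_ge; auto.
  intros y [mu [H1 [H2 [H3 H4]]]].
  assert (Rabs a + Rabs b <= Bnd S * y).
  { subst. eapply Rle_trans. apply Rplus_le_compat; apply rsum_abs.
    rewrite <- rsum_plus. rewrite <- rsum_scal.
    apply rsum_le. intros i Hi. rewrite !Rabs_mult. rewrite (Rabs_right (mu i)) by (specialize (H1 i); lra).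
    assert (Rabs (hx (nth i S horigin)) + Rabs (hy (nth i S horigin)) <= Bnd S).
    { unfold Bnd. pose proof (rsum_term_le (fun i => Rabs (hx (nth i S horigin)) + Rabs (hy (nth i S horigin))) (length S) i) as T.
      simpl in T. assert (Hf : forall i, 0 <= Rabs (hx (nth i S horigin)) + Rabs (hy (nth i S horigin))).
      intros; pose proof (Rabs_pos (hx (nth i0 S horigin))); pose proof (Rabs_pos (hy (nth i0 S horigin))); lra.
      specialize (T Hf Hi). lra. }
    specialize (H1 i). nra. }
  unfold Rdiv. apply (Rmult_le_reg_l (Bnd S)); auto.
  replace (Bnd S * ((Rabs a + Rabs b) * / Bnd S)) with (Rabs a + Rabs b) by (field; lra). lra.
Qed.

Definition Ef (g : R -> H3) (s t : R) : R :=
  hz (g t) - hz (g s) - / 2 * (hx (g s) * (hy (g t) - hy (g s)) - hy (g s) * (hx (g t) - hx (g s))).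

Definition Good (Sg : list H3) (g : R -> H3) (L : R) : Prop :=
  (exists M, 0 <= M /\ forall s t, 0 <= s -> s <= t -> t <= 1 ->
     Rabs (hx (g t) - hx (g s)) <= M * (t - s) /\ Rabs (hy (g t) - hy (g s)) <= M * (t - s) /\
     Rabs (hz (g t) - hz (g s)) <= M * (t - s) /\ Rabs (Ef g s t) <= M * ((t - s) * (t - s))) /\
  (exists Lam : R -> R, (forall s t, 0 <= s -> s <= t -> t <= 1 ->
     normL Sg (hx (g t) - hx (g s)) (hy (g t) - hy (g s)) <= Lam t - Lam s) /\ Lam 1 - Lam 0 = L) /\
  (exists k p, partition 0 1 k p /\ var_sum Sg g k p = L).

Lemma partition_mono a b k p : partition a b k p -> forall i j, (i <= j)%nat -> (j <= k)%nat -> p i <= p j.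
Proof. intros [_ [_ H]] i j Hij Hjk. induction j.
  - assert (i = 0%nat) by lia; subst; lra.
  - destruct (Nat.eq_dec i (S j)). subst; lra.
    assert (p i <= p j) by (apply IHj; lia). assert (p j <= p (S j)) by (apply H; lia). lra. Qed.

Lemma partition_range a b k p : partition a b k p -> forall i, (i <= k)%nat -> a <= p i <= b.
Proof. intros Hp i Hi. pose proof (partition_mono _ _ _ _ Hp) as M. destruct Hp as [H0 [H1 _]].
  split. rewrite <- H0. apply M; lia. rewrite <- H1. apply M; lia. Qed.

Lemma Good_lenbound Sg g L : Good Sg g L -> forall k p, partition 0 1 k p -> var_sum Sg g k p <= L.
Proof. intros [_ [[Lam [HL1 HL2]] _]] k p Hp. unfold var_sum.
  pose proof (partition_range _ _ _ _ Hp) as R.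
  eapply Rle_trans. apply (rsum_le _ (fun i => Lam (p (S i)) - Lam (p i))).
  intros i Hi. apply HL1. apply (R i); lia. destruct Hp as [_ [_ H]]; apply H; lia. apply (R (S i)); lia.
  rewrite (rsum_tele (fun i => Lam (p i))). destruct Hp as [H0 [H1 _]]. rewrite H0, H1. lra. Qed.

Lemma Good_length Sg g L : Good Sg g L -> path_length Sg g = L.
Proof. intros HG. unfold path_length.
  assert (Hl : is_lub (length_set Sg g) L).
  { split. intros v [k [p [Hp ->]]]. eapply Good_lenbound; eauto.
    intros b Hb. destruct HG as [_ [_ [k [p [Hp Hv]]]]]. apply Hb. exists k, p; auto. }
  apply (lub_unique (length_set Sg g)); auto. apply Rsup_spec.
  destruct HG as [_ [_ [k [p [Hp Hv]]]]]. exists L, k, p; auto.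
  exists L. apply Hl. Qed.

Lemma Rabs_le_sym a b c : Rabs (a - b) <= c -> Rabs (b - a) <= c.
Proof. rewrite Rabs_minus_sym; auto. Qed.

Lemma Good_admissible Sg g L : Good Sg g L -> admissible Sg g.
Proof. intros HG. pose proof HG as [[M [HM HB]] [[Lam [HL1 HL2]] _]]. split; [|split].
  - intros t Ht e He. exists (e / (M + 1)). split. apply Rdiv_lt_0_compat; lra.
    intros s Hs Hst.
    assert (Hd : M * Rabs (s - t) < e).
    { apply Rle_lt_trans with (M * (e / (M+1))). apply Rmult_le_compat_l; lra.
      apply (Rmult_lt_reg_l (M+1)). lra. replace ((M + 1) * (M * (e / (M + 1)))) with (M * e) by (field; lra). nra. }
    destruct (Rle_or_lt s t).
    + destruct (HB s t) as [A [B [C _]]]; try lra.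
      rewrite Rabs_minus_sym in Hd. rewrite Rabs_right in Hd by lra.
      repeat split; apply Rabs_le_sym in A; apply Rabs_le_sym in B; apply Rabs_le_sym in C; lra.
    + destruct (HB t s) as [A [B [C _]]]; try lra.
      rewrite Rabs_right in Hd by lra. repeat split; lra.
  - exists L. intros v [k [p [Hp ->]]]. eapply Good_lenbound; eauto.
  - intros t Ht e He. exists (e / (M + 1)). split. apply Rdiv_lt_0_compat; lra.
    intros k p Hp Hm. pose proof (partition_range _ _ _ _ Hp) as R.
    assert (Eq : hz (g t) - hz (g 0) - area_sum g k p = rsum (fun i => Ef g (p i) (p (S i))) k).
    { unfold Ef, area_sum. rewrite rsum_minus.
      rewrite (rsum_tele (fun i => hz (g (p i)))). destruct Hp as [H0 [H1 _]]. rewrite H0, H1. ring. }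
    rewrite Eq. eapply Rle_lt_trans. apply rsum_abs.
    apply Rle_lt_trans with (rsum (fun i => M * (e / (M+1)) * (p (S i) - p i)) k).
    + apply rsum_le. intros i Hi. pose proof (R i) as Ri. pose proof (R (S i)) as RSi.
      assert (Hmono : p i <= p (S i)) by (destruct Hp as [_ [_ H]]; apply H; lia).
      specialize (Ri ltac:(lia)). specialize (RSi ltac:(lia)).
      destruct (HB (p i) (p (S i))) as [_ [_ [_ HE]]]; try lra.
      specialize (Hm i Hi).
      eapply Rle_trans. apply HE. 
      assert (0 <= p (S i) - p i) by lra.
      assert (HDd : (p (S i) - p i) * (p (S i) - p i) <= (e / (M+1)) * (p (S i) - p i)).
      { apply Rmult_le_compat_r; lra. }
      assert (M * ((p (S i) - p i) * (p (S i) - p i)) <= M * ((e / (M+1)) * (p (S i) - p i))).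
      { apply Rmult_le_compat_l; lra. } lra.
    + rewrite rsum_scal. rewrite (rsum_tele p). destruct Hp as [H0 [H1 _]]. rewrite H0, H1.
      replace (M * (e / (M + 1)) * (t - 0)) with (e * (M / (M+1)) * t) by (field; lra).
      assert (M / (M+1) < 1). { apply (Rmult_lt_reg_l (M+1)). lra. replace ((M + 1) * (M / (M + 1))) with M by (field; lra). lra. }
      assert (0 <= M / (M+1)). { unfold Rdiv. apply Rmult_le_pos. lra. apply Rlt_le, Rinv_0_lt_compat. lra. }
      set (q := M / (M+1)) in *.
      assert (e * q * t <= e * q * 1). { apply Rmult_le_compat_l. apply Rmult_le_pos; lra. lra. }
      assert (e * q < e * 1) by (apply Rmult_lt_compat_l; lra). lra.
Qed.

Definition EE (A C : H3) : R :=
  hz C - hz A - / 2 * (hx A * (hy C - hy A) - hy A * (hx C - hx A)).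

Definition Bd (g : R -> H3) (M s t : R) : Prop :=
  Rabs (hx (g t) - hx (g s)) <= M * (t - s) /\ Rabs (hy (g t) - hy (g s)) <= M * (t - s) /\
  Rabs (hz (g t) - hz (g s)) <= M * (t - s) /\ Rabs (Ef g s t) <= M * ((t - s) * (t - s)).

Lemma straddle (A B C : H3) M1 M2 u v : 0 <= M1 -> 0 <= M2 -> 0 <= u -> 0 <= v ->
  Rabs (hx B - hx A) <= M1 * u -> Rabs (hy B - hy A) <= M1 * u ->
  Rabs (hz B - hz A) <= M1 * u -> Rabs (EE A B) <= M1 * (u * u) ->
  Rabs (hx C - hx B) <= M2 * v -> Rabs (hy C - hy B) <= M2 * v ->
  Rabs (hz C - hz B) <= M2 * v -> Rabs (EE B C) <= M2 * (v * v) ->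
  Rabs (hx C - hx A) <= (M1 + M2) * (u + v) /\ Rabs (hy C - hy A) <= (M1 + M2) * (u + v) /\
  Rabs (hz C - hz A) <= (M1 + M2) * (u + v) /\
  Rabs (EE A C) <= (M1 + M2 + M1 * M2) * ((u + v) * (u + v)).
Proof. intros H1 H2 Hu Hv X1 Y1 Z1 E1 X2 Y2 Z2 E2.
  assert (T : forall a b c d, Rabs (b - a) <= M1 * u -> Rabs (c - b) <= M2 * v -> c - a = d ->
     Rabs d <= (M1 + M2) * (u + v)).
  { intros a b c d Ha Hb Hd. rewrite <- Hd. replace (c - a) with ((c - b) + (b - a)) by ring.
    pose proof (Rabs_triang (c - b) (b - a)). assert (M1 * u <= M1 * (u+v)) by (apply Rmult_le_compat_l; lra).
    assert (M2 * v <= M2 * (u+v)) by (apply Rmult_le_compat_l; lra). lra. }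
  split; [eapply T; [exact X1|exact X2|ring]|split; [eapply T; [exact Y1|exact Y2|ring]|split; [eapply T; [exact Z1|exact Z2|ring]|]]].
  replace (EE A C) with (EE A B + EE B C + / 2 * ((hx B - hx A) * (hy C - hy B) - (hy B - hy A) * (hx C - hx B)))
    by (unfold EE; ring).
  eapply Rle_trans. apply Rabs_triang. eapply Rle_trans. apply Rplus_le_compat_r. apply Rabs_triang.
  rewrite Rabs_mult. rewrite (Rabs_right (/2)) by lra.
  assert (P : Rabs ((hx B - hx A) * (hy C - hy B) - (hy B - hy A) * (hx C - hx B)) <= 2 * (M1 * u * (M2 * v))).
  { eapply Rle_trans. apply Rabs_triang. rewrite Rabs_Ropp, !Rabs_mult.
    assert (Rabs (hx B - hx A) * Rabs (hy C - hy B) <= M1 * u * (M2 * v)) by (apply Rmult_le_compat; auto; apply Rabs_pos).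
    assert (Rabs (hy B - hy A) * Rabs (hx C - hx B) <= M1 * u * (M2 * v)) by (apply Rmult_le_compat; auto; apply Rabs_pos).
    lra. }
  assert (uu : u * u <= (u+v)*(u+v)) by nra.
  assert (vv : v * v <= (u+v)*(u+v)) by nra.
  assert (uv : u * v <= (u+v)*(u+v)) by nra.
  assert (M1 * (u*u) <= M1 * ((u+v)*(u+v))) by (apply Rmult_le_compat_l; lra).
  assert (M2 * (v*v) <= M2 * ((u+v)*(u+v))) by (apply Rmult_le_compat_l; lra).
  assert (M1 * u * (M2 * v) = (M1 * M2) * (u * v)) by ring.
  assert ((M1 * M2) * (u * v) <= (M1 * M2) * ((u+v)*(u+v))) by (apply Rmult_le_compat_l; nra).
  lra.
Qed.

Lemma Ef_EE g s t : Ef g s t = EE (g s) (g t).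
Proof. reflexivity. Qed.

Lemma Bd_rescale (g h : R -> H3) M s t s' t' : 0 <= M -> s <= t -> t' - s' = 2 * (t - s) ->
  h s = g s' -> h t = g t' -> Bd g M s' t' -> Bd h (4 * M) s t.
Proof. intros HM Hst Ht Hs1 Ht1 [A [B [C D]]]. unfold Bd. rewrite !Ef_EE in *. rewrite Hs1, Ht1. rewrite Ht in *.
  assert (M * (2 * (t - s)) <= 4 * M * (t - s)) by nra.
  repeat split; try lra; nra. Qed.

Definition cst (P : H3) : R -> H3 := fun _ => P.
Definition seg (P : H3) (a b : R) : R -> H3 := fun t => hmul P (mkH (t * a) (t * b) 0).
Definition concat (g1 g2 : R -> H3) : R -> H3 :=
  fun t => if Rle_dec t (/ 2) then g1 (2 * t) else g2 (2 * t - 1).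

Definition p01 (i : nat) : R := match i with O => 0 | _ => 1 end.

Lemma partition_p01 : partition 0 1 1 p01.
Proof. split; [|split]; simpl; auto. intros i Hi. assert (i = 0%nat) by lia. subst. simpl. lra. Qed.

Lemma Good_cst Sg P : NGood Sg -> Good Sg (cst P) 0.
Proof. intros NG. unfold Good, cst. split; [|split].
  - exists 0. split. lra. intros s t _ _ _. unfold Ef. rewrite !Rminus_diag. 
    rewrite Rabs_R0. repeat split; try lra.
    replace (0 - / 2 * (hx P * 0 - hy P * 0)) with 0 by ring. rewrite Rabs_R0; lra.
  - exists (fun _ => 0). split. intros. rewrite !Rminus_diag, normL_zero; auto. lra. lra.
  - exists 1%nat, p01. split. apply partition_p01. unfold var_sum. simpl. rewrite !Rminus_diag, normL_zero; auto. lra.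
Qed.

Lemma Good_seg Sg P a b : NGood Sg -> Good Sg (seg P a b) (normL Sg a b).
Proof. intros NG. unfold Good. split; [|split].
  - exists (Rabs a + Rabs b + Rabs (/2 * (hx P * b - hy P * a))). split.
    pose proof (Rabs_pos a); pose proof (Rabs_pos b); pose proof (Rabs_pos (/2 * (hx P * b - hy P * a))); lra.
    intros s t Hs Hst Ht. unfold Ef, seg, hmul; simpl.
    replace (hx P + t * a - (hx P + s * a)) with ((t - s) * a) by ring.
    replace (hy P + t * b - (hy P + s * b)) with ((t - s) * b) by ring.
    replace (hz P + 0 + / 2 * (hx P * (t * b) - hy P * (t * a)) - (hz P + 0 + / 2 * (hx P * (s * b) - hy P * (s * a))))
      with ((t - s) * (/2 * (hx P * b - hy P * a))) by ring.
    replace ((t - s) * (/ 2 * (hx P * b - hy P * a)) -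
     / 2 * ((hx P + s * a) * ((t - s) * b) - (hy P + s * b) * ((t - s) * a))) with 0 by ring.
    rewrite Rabs_R0. rewrite !(Rabs_mult (t - s)), !(Rabs_right (t - s)) by lra.
    pose proof (Rabs_pos a); pose proof (Rabs_pos b); pose proof (Rabs_pos (/2 * (hx P * b - hy P * a))).
    repeat split; try nra.
    apply Rmult_le_pos. lra. apply Rmult_le_pos; lra.
  - exists (fun t => t * normL Sg a b). split; [|lra]. intros s t Hs Hst Ht. unfold seg, hmul; simpl.
    replace (hx P + t * a - (hx P + s * a)) with ((t - s) * a) by ring.
    replace (hy P + t * b - (hy P + s * b)) with ((t - s) * b) by ring.
    rewrite normL_hom; auto; lra.
  - exists 1%nat, p01. split. apply partition_p01. unfold var_sum, seg, hmul. simpl.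
    replace (hx P + 1 * a - (hx P + 0 * a)) with a by ring.
    replace (hy P + 1 * b - (hy P + 0 * b)) with b by ring. lra.
Qed.

Lemma cv1 g1 g2 t : t <= / 2 -> concat g1 g2 t = g1 (2 * t).
Proof. intros H. unfold concat. destruct (Rle_dec t (/2)); [auto|lra]. Qed.

Lemma cv2 g1 g2 t : g1 1 = g2 0 -> / 2 <= t -> concat g1 g2 t = g2 (2 * t - 1).
Proof. intros E H. unfold concat. destruct (Rle_dec t (/2)); [|auto].
  assert (t = /2) by lra. subst. replace (2 * / 2) with 1 by field. replace (1 - 1) with 0 by ring. auto. Qed.

Lemma Bd_mono g M M' s t : M <= M' -> s <= t -> Bd g M s t -> Bd g M' s t.
Proof. intros HM Hst [A [B [C D]]]. unfold Bd.
  assert (M * (t - s) <= M' * (t - s)) by (apply Rmult_le_compat_r; lra).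
  assert (M * ((t - s) * (t - s)) <= M' * ((t - s) * (t - s))) by (apply Rmult_le_compat_r; nra).
  repeat split; lra. Qed.

Lemma Good_Bd Sg g L : Good Sg g L -> exists M, 0 <= M /\ forall s t, 0 <= s -> s <= t -> t <= 1 -> Bd g M s t.
Proof. intros [[M [HM H]] _]. exists M. split; auto. Qed.

Lemma concat_Bd g1 g2 M1 M2 : g1 1 = g2 0 -> 0 <= M1 -> 0 <= M2 ->
  (forall s t, 0 <= s -> s <= t -> t <= 1 -> Bd g1 M1 s t) ->
  (forall s t, 0 <= s -> s <= t -> t <= 1 -> Bd g2 M2 s t) ->
  forall s t, 0 <= s -> s <= t -> t <= 1 -> Bd (concat g1 g2) (4 * (M1 + M2 + M1 * M2)) s t.
Proof. intros E HM1 HM2 B1 B2 s t Hs Hst Ht.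
  assert (HM : 4 * M1 <= 4 * (M1 + M2 + M1 * M2)) by nra.
  assert (HM' : 4 * M2 <= 4 * (M1 + M2 + M1 * M2)) by nra.
  destruct (Rle_dec t (/2)).
  - apply Bd_mono with (4 * M1); auto. apply Bd_rescale with g1 (2 * s) (2 * t); auto; try lra.
    apply cv1; lra. apply cv1; lra. apply B1; lra.
  - destruct (Rle_dec (/2) s).
    + apply Bd_mono with (4 * M2); auto. apply Bd_rescale with g2 (2 * s - 1) (2 * t - 1); auto; try lra.
      apply cv2; auto; lra. apply cv2; auto; lra. apply B2; lra.
    + destruct (B1 (2 * s) 1) as [X1 [Y1 [Z1 E1]]]; try lra.
      destruct (B2 0 (2 * t - 1)) as [X2 [Y2 [Z2 E2]]]; try lra.
      rewrite Ef_EE in E1, E2. rewrite <- E in X2, Y2, Z2, E2. rewrite Rminus_0_r in X2, Y2, Z2, E2.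
      destruct (straddle (g1 (2 * s)) (g1 1) (g2 (2 * t - 1)) M1 M2 (1 - 2 * s) (2 * t - 1))
        as [X [Y [Z EE']]]; auto; try lra.
      unfold Bd. rewrite Ef_EE. rewrite (cv1 g1 g2 s) by lra. rewrite (cv2 g1 g2 t) by (auto; lra).
      replace (1 - 2 * s + (2 * t - 1)) with (2 * (t - s)) in X, Y, Z, EE' by ring.
      assert ((M1 + M2) * (2 * (t - s)) <= 4 * (M1 + M2 + M1 * M2) * (t - s)).
      { assert (0 <= M1 * M2 * (t - s)) by (apply Rmult_le_pos; [apply Rmult_le_pos|]; lra). nra. }
      assert ((M1 + M2 + M1 * M2) * (2 * (t - s) * (2 * (t - s))) = 4 * (M1 + M2 + M1 * M2) * ((t - s) * (t - s))) by ring.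
      repeat split; lra.
Qed.

Definition concatLam (La1 La2 : R -> R) : R -> R :=
  fun t => if Rle_dec t (/2) then La1 (2 * t) - La1 0 else (La1 1 - La1 0) + (La2 (2 * t - 1) - La2 0).

Lemma concat_Lam Sg g1 g2 La1 La2 : NGood Sg -> g1 1 = g2 0 ->
  (forall s t, 0 <= s -> s <= t -> t <= 1 ->
     normL Sg (hx (g1 t) - hx (g1 s)) (hy (g1 t) - hy (g1 s)) <= La1 t - La1 s) ->
  (forall s t, 0 <= s -> s <= t -> t <= 1 ->
     normL Sg (hx (g2 t) - hx (g2 s)) (hy (g2 t) - hy (g2 s)) <= La2 t - La2 s) ->
  forall s t, 0 <= s -> s <= t -> t <= 1 ->
     normL Sg (hx (concat g1 g2 t) - hx (concat g1 g2 s)) (hy (concat g1 g2 t) - hy (concat g1 g2 s))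
       <= concatLam La1 La2 t - concatLam La1 La2 s.
Proof. intros NG E H1 H2 s t Hs Hst Ht. unfold concatLam.
  destruct (Rle_dec t (/2)); destruct (Rle_dec s (/2)); try lra.
  - rewrite (cv1 g1 g2 t), (cv1 g1 g2 s) by lra.
    assert (normL Sg (hx (g1 (2 * t)) - hx (g1 (2 * s))) (hy (g1 (2 * t)) - hy (g1 (2 * s))) <= La1 (2*t) - La1 (2*s)) by (apply H1; lra). lra.
  - rewrite (cv2 g1 g2 t), (cv1 g1 g2 s) by (auto; lra).
    replace (hx (g2 (2 * t - 1)) - hx (g1 (2 * s))) with ((hx (g2 (2 * t - 1)) - hx (g2 0)) + (hx (g1 1) - hx (g1 (2 * s)))) by (rewrite E; ring).
    replace (hy (g2 (2 * t - 1)) - hy (g1 (2 * s))) with ((hy (g2 (2 * t - 1)) - hy (g2 0)) + (hy (g1 1) - hy (g1 (2 * s)))) by (rewrite E; ring).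
    eapply Rle_trans. apply normL_tri; auto.
    assert (normL Sg (hx (g2 (2 * t - 1)) - hx (g2 0)) (hy (g2 (2 * t - 1)) - hy (g2 0)) <= La2 (2 * t - 1) - La2 0) by (apply H2; lra).
    assert (normL Sg (hx (g1 1) - hx (g1 (2 * s))) (hy (g1 1) - hy (g1 (2 * s))) <= La1 1 - La1 (2 * s)) by (apply H1; lra).
    lra.
  - rewrite (cv2 g1 g2 t), (cv2 g1 g2 s) by (auto; lra).
    assert (normL Sg (hx (g2 (2 * t - 1)) - hx (g2 (2 * s - 1))) (hy (g2 (2 * t - 1)) - hy (g2 (2 * s - 1))) <= La2 (2*t-1) - La2 (2*s-1)) by (apply H2; lra). lra.
Qed.

Definition cpart (k1 : nat) (p1 p2 : nat -> R) (i : nat) : R :=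
  if le_lt_dec i k1 then p1 i / 2 else (1 + p2 (i - k1)%nat) / 2.

Lemma cpart_a k1 p1 p2 i : (i <= k1)%nat -> cpart k1 p1 p2 i = p1 i / 2.
Proof. intros H. unfold cpart. destruct (le_lt_dec i k1); auto; lia. Qed.

Lemma cpart_b k1 k2 p1 p2 i : partition 0 1 k1 p1 -> partition 0 1 k2 p2 -> (k1 <= i)%nat ->
  cpart k1 p1 p2 i = (1 + p2 (i - k1)%nat) / 2.
Proof. intros [_ [A _]] [B _] H. unfold cpart. destruct (le_lt_dec i k1); auto.
  assert (i = k1) by lia. subst. rewrite Nat.sub_diag, A, B. field. Qed.

Lemma concat_witness Sg g1 g2 k1 p1 k2 p2 : g1 1 = g2 0 ->
  partition 0 1 k1 p1 -> partition 0 1 k2 p2 ->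
  partition 0 1 (k1 + k2) (cpart k1 p1 p2) /\
  var_sum Sg (concat g1 g2) (k1 + k2) (cpart k1 p1 p2) = var_sum Sg g1 k1 p1 + var_sum Sg g2 k2 p2.
Proof. intros E Hp1 Hp2.
  pose proof (partition_range _ _ _ _ Hp1) as R1. pose proof (partition_range _ _ _ _ Hp2) as R2.
  assert (HA : forall i, (i <= k1)%nat -> concat g1 g2 (cpart k1 p1 p2 i) = g1 (p1 i)).
  { intros i Hi. rewrite cpart_a by auto. specialize (R1 i Hi). rewrite cv1 by lra.
    f_equal; field. }
  assert (HB : forall i, (k1 <= i)%nat -> (i - k1 <= k2)%nat -> concat g1 g2 (cpart k1 p1 p2 i) = g2 (p2 (i - k1)%nat)).
  { intros i Hi Hi2. rewrite (cpart_b k1 k2) by auto. specialize (R2 _ Hi2). rewrite cv2 by (auto; lra).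
    f_equal; field. }
  split; [split; [|split]|].
  - rewrite cpart_a by lia. destruct Hp1 as [H0 _]. rewrite H0; field.
  - rewrite (cpart_b k1 k2) by (auto; lia). replace (k1 + k2 - k1)%nat with k2 by lia.
    destruct Hp2 as [_ [H0 _]]. rewrite H0; field.
  - intros i Hi. destruct (le_lt_dec (S i) k1).
    + rewrite !cpart_a by lia. destruct Hp1 as [_ [_ M]]. specialize (M i ltac:(lia)). lra.
    + rewrite !(cpart_b k1 k2) by (auto; lia). replace (S i - k1)%nat with (S (i - k1)) by lia.
      destruct Hp2 as [_ [_ M]]. specialize (M (i - k1)%nat ltac:(lia)). lra.
  - unfold var_sum. rewrite rsum_app. f_equal.
    + apply rsum_ext. intros i Hi. rewrite !HA by lia. auto.
    + apply rsum_ext. intros j Hj. rewrite !HB by lia.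
      replace (S (k1 + j) - k1)%nat with (S j) by lia. replace (k1 + j - k1)%nat with j by lia. auto.
Qed.

Lemma Good_concat Sg g1 g2 L1 L2 : NGood Sg -> g1 1 = g2 0 ->
  Good Sg g1 L1 -> Good Sg g2 L2 -> Good Sg (concat g1 g2) (L1 + L2).
Proof. intros NG E [[M1 [HM1 B1]] [[La1 [HLa1 HLa1e]] [k1 [p1 [Hp1 Hv1]]]]]
  [[M2 [HM2 B2]] [[La2 [HLa2 HLa2e]] [k2 [p2 [Hp2 Hv2]]]]]. split; [|split].
  - exists (4 * (M1 + M2 + M1 * M2)). split. assert (0 <= M1 * M2) by (apply Rmult_le_pos; auto). lra.
    apply concat_Bd; auto.
  - exists (concatLam La1 La2). split. apply concat_Lam; auto.
    unfold concatLam. destruct (Rle_dec 1 (/2)); try lra. destruct (Rle_dec 0 (/2)); try lra.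
    replace (2 * 1 - 1) with 1 by ring. replace (2 * 0) with 0 by ring. lra.
  - exists (k1 + k2)%nat, (cpart k1 p1 p2). destruct (concat_witness Sg g1 g2 k1 p1 k2 p2) as [A B]; auto.
    split; auto. rewrite B, Hv1, Hv2. auto.
Qed.

Lemma concat_0 g1 g2 : concat g1 g2 0 = g1 0.
Proof. rewrite cv1 by lra. f_equal; ring. Qed.

Lemma concat_1 g1 g2 : g1 1 = g2 0 -> concat g1 g2 1 = g2 1.
Proof. intros E. rewrite cv2 by (auto; lra). f_equal; ring. Qed.

Definition onpath (g : R -> H3) (y : H3) : Prop := exists t, 0 <= t <= 1 /\ g t = y.

Lemma onpath_l g1 g2 y : onpath g1 y -> onpath (concat g1 g2) y.
Proof. intros [t [Ht E]]. exists (t / 2). split. lra. rewrite cv1 by lra. rewrite <- E. f_equal; field. Qed.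

Lemma onpath_r g1 g2 y : g1 1 = g2 0 -> onpath g2 y -> onpath (concat g1 g2) y.
Proof. intros E0 [t [Ht E]]. exists ((1 + t) / 2). split. lra. rewrite cv2 by (auto; lra). rewrite <- E. f_equal; field. Qed.

Lemma H3_ext (a b : H3) : hx a = hx b -> hy a = hy b -> hz a = hz b -> a = b.
Proof. destruct a, b; simpl; intros; subst; auto. Qed.

Lemma hmul_assoc a b c : hmul (hmul a b) c = hmul a (hmul b c).
Proof. apply H3_ext; unfold hmul; simpl; ring. Qed.

Lemma hmul_0_r a : hmul a horigin = a.
Proof. apply H3_ext; unfold hmul, horigin; simpl; ring. Qed.

Lemma hmul_0_l a : hmul horigin a = a.
Proof. apply H3_ext; unfold hmul, horigin; simpl; ring. Qed.

Definition hv (v : R * R) : H3 := mkH (fst v) (snd v) 0.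

Fixpoint plpath (P : H3) (vs : list (R * R)) : R -> H3 :=
  match vs with
  | nil => cst P
  | v :: vs' => concat (seg P (fst v) (snd v)) (plpath (hmul P (hv v)) vs')
  end.

Definition lprod (vs : list (R * R)) : H3 := fold_right (fun v acc => hmul (hv v) acc) horigin vs.

Definition plen (Sg : list H3) (vs : list (R * R)) : R :=
  fold_right (fun v acc => normL Sg (fst v) (snd v) + acc) 0 vs.

Lemma seg_0 P a b : seg P a b 0 = P.
Proof. apply H3_ext; unfold seg, hmul; simpl; ring. Qed.

Lemma seg_1 P a b : seg P a b 1 = hmul P (hv (a, b)).
Proof. apply H3_ext; unfold seg, hmul, hv; simpl; ring. Qed.

Lemma pl_start P vs : plpath P vs 0 = P.
Proof. destruct vs as [|v vs]; simpl. reflexivity. rewrite concat_0. apply seg_0. Qed.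

Lemma pl_junction P v vs : seg P (fst v) (snd v) 1 = plpath (hmul P (hv v)) vs 0.
Proof. rewrite pl_start, seg_1. destruct v; auto. Qed.

Lemma pl_end P vs : plpath P vs 1 = hmul P (lprod vs).
Proof. revert P; induction vs as [|v vs IH]; intros P; simpl.
  - unfold cst. rewrite hmul_0_r; auto.
  - rewrite concat_1 by apply pl_junction. rewrite IH, hmul_assoc; auto. Qed.

Lemma pl_good Sg P vs : NGood Sg -> Good Sg (plpath P vs) (plen Sg vs).
Proof. intros NG. revert P; induction vs as [|v vs IH]; intros P; simpl.
  - apply Good_cst; auto.
  - apply Good_concat; auto. apply pl_junction. apply Good_seg; auto. Qed.

Lemma pl_vertex P vs i : (i <= length vs)%nat -> onpath (plpath P vs) (hmul P (lprod (firstn i vs))).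
Proof. revert P i; induction vs as [|v vs IH]; intros P i Hi.
  - simpl in Hi. assert (i = 0%nat) by lia. subst. simpl. exists 0. split. lra. unfold cst. rewrite hmul_0_r; auto.
  - destruct i as [|i].
    + simpl. exists 0. split. lra. rewrite concat_0, seg_0, hmul_0_r. auto.
    + simpl. rewrite <- hmul_assoc. apply onpath_r. apply pl_junction. apply IH. simpl in Hi; lia.
Qed.

Lemma lprod_app a b : lprod (a ++ b) = hmul (lprod a) (lprod b).
Proof. induction a as [|v a IH]; simpl. rewrite hmul_0_l; auto. rewrite IH, hmul_assoc; auto. Qed.

Lemma plen_app Sg a b : plen Sg (a ++ b) = plen Sg a + plen Sg b.
Proof. induction a as [|v a IH]; simpl. lra. rewrite IH; lra. Qed.

Lemma pl_admissible Sg P vs : NGood Sg -> admissible Sg (plpath P vs).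
Proof. intros NG. eapply Good_admissible. apply pl_good; auto. Qed.

Lemma pl_length Sg P vs : NGood Sg -> path_length Sg (plpath P vs) = plen Sg vs.
Proof. intros NG. apply Good_length. apply pl_good; auto. Qed.

Definition cross (a b : H3) : R := hx a * hy b - hy a * hx b.

Lemma wprod_x w : hx (wprod w) = fold_right (fun s a => hx s + a) 0 w.
Proof. induction w; simpl; auto. rewrite <- IHw; auto. Qed.
Lemma wprod_y w : hy (wprod w) = fold_right (fun s a => hy s + a) 0 w.
Proof. induction w; simpl; auto. rewrite <- IHw; auto. Qed.

Lemma cross_all_zero (Sg : list H3) : (forall s1 s2, In s1 Sg -> In s2 Sg -> cross s1 s2 = 0) ->
  forall w1 w2, (forall s, In s w1 -> In s Sg) -> (forall s, In s w2 -> In s Sg) ->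
  cross (wprod w1) (wprod w2) = 0.
Proof. intros H w1 w2 H1 H2. unfold cross. rewrite !wprod_x, !wprod_y.
  assert (A : forall s, In s Sg -> fold_right (fun s a => hx s + a) 0 w1 * hy s - fold_right (fun s a => hy s + a) 0 w1 * hx s = 0).
  { intros s Hs. clear H2. induction w1 as [|a w1 IH]; simpl. ring.
    assert (hx a * hy s - hy a * hx s = 0) by (apply H; auto; apply H1; simpl; auto).
    assert (fold_right (fun s a => hx s + a) 0 w1 * hy s - fold_right (fun s a => hy s + a) 0 w1 * hx s = 0) by (apply IH; intros; apply H1; simpl; auto).
    lra. }
  induction w2 as [|b w2 IH]; simpl. ring.
  specialize (A b (H2 b (or_introl eq_refl))).
  assert (fold_right (fun s a => hx s + a) 0 w1 * fold_right (fun s a => hy s + a) 0 w2 - fold_right (fun s a => hy s + a) 0 w1 * fold_right (fun s a => hx s + a) 0 w2 = 0) by (apply IH; intros; apply H2; simpl; auto).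
  nra. Qed.

Lemma inHZ_100 : inHZ (mkH 1 0 0).
Proof. exists 1%Z, 0%Z, 0%Z. simpl. repeat split; lra. Qed.
Lemma inHZ_010 : inHZ (mkH 0 1 0).
Proof. exists 0%Z, 1%Z, 0%Z. simpl. repeat split; lra. Qed.

Lemma gen_cross Sg : generates Sg -> exists s1 s2, In s1 Sg /\ In s2 Sg /\ cross s1 s2 > 0.
Proof. intros Hg. apply NNPP. intros Hn.
  assert (H : forall s1 s2, In s1 Sg -> In s2 Sg -> cross s1 s2 = 0).
  { intros s1 s2 H1 H2. destruct (Rtotal_order (cross s1 s2) 0) as [L|[E|G]]; auto.
    - exfalso. apply Hn. exists s2, s1. repeat split; auto. unfold cross in *; lra.
    - exfalso. apply Hn. exists s1, s2. auto. }
  destruct (Hg _ inHZ_100) as [w1 [W1 E1]]. destruct (Hg _ inHZ_010) as [w2 [W2 E2]].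
  pose proof (cross_all_zero Sg H w1 w2 W1 W2) as C. rewrite E1, E2 in C. unfold cross in C; simpl in C. lra.
Qed.

Lemma gen_nonnil Sg : generates Sg -> Sg <> nil.
Proof. intros Hg E. destruct (Hg _ inHZ_100) as [w [W Ew]]. destruct w as [|s w].
  simpl in Ew. unfold horigin in Ew. injection Ew; intros; lra.
  subst. apply (W s); simpl; auto. Qed.

Lemma Tm_ext Sg a b y a' b' y' : a = a' -> b = b' -> y = y' -> Tm Sg a b y -> Tm Sg a' b' y'.
Proof. intros; subst; auto. Qed.

Lemma Tm_line Sg s c : In s Sg -> In (hinv s) Sg -> exists y, Tm Sg (c * hx s) (c * hy s) y.
Proof. intros H1 H2. destruct (Rle_or_lt 0 c).
  - exists (c * 1). apply Tm_scale; auto. apply Tm_S; auto.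
  - exists (- c * 1). apply (Tm_ext Sg (-c * hx (hinv s)) (- c * hy (hinv s)) (-c * 1)); try (unfold hinv; simpl; ring).
    apply Tm_scale. lra. apply Tm_S; auto.
Qed.

Lemma absorbing Sg s1 s2 : In s1 Sg -> In s2 Sg -> In (hinv s1) Sg -> In (hinv s2) Sg -> cross s1 s2 > 0 ->
  forall a b, exists y, Tm Sg a b y.
Proof. intros H1 H2 H3 H4 Hk a b. unfold cross in Hk.
  set (k := hx s1 * hy s2 - hy s1 * hx s2) in *.
  set (al := (a * hy s2 - b * hx s2) / k). set (be := (hx s1 * b - hy s1 * a) / k).
  destruct (Tm_line Sg s1 al H1 H3) as [y1 Y1]. destruct (Tm_line Sg s2 be H2 H4) as [y2 Y2].
  pose proof (Rgt_not_eq _ _ Hk) as Hk0.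
  exists (y1 + y2). eapply Tm_ext; [| | reflexivity | apply (Tm_add _ _ _ _ _ _ _ Y1 Y2)];
  unfold al, be, k; field; unfold k in Hk0; exact Hk0. Qed.

Lemma normL_gen Sg t c : NGood Sg -> In t Sg -> 0 <= c -> normL Sg (c * hx t) (c * hy t) <= c.
Proof. intros NG Ht Hc. apply normL_le; auto. apply (Tm_ext Sg (c * hx t) (c * hy t) (c * 1)); try ring.
  apply Tm_scale; auto. apply Tm_S; auto. Qed.

Definition lp4 (c : R) (a b : H3) : list (R * R) :=
  (c * hx a, c * hy a) :: (c * hx b, c * hy b) :: (c * hx (hinv a), c * hy (hinv a)) ::
  (c * hx (hinv b), c * hy (hinv b)) :: nil.

Lemma lprod_lp4 c a b : lprod (lp4 c a b) = mkH 0 0 (c * c * cross a b).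
Proof. apply H3_ext; unfold lprod, lp4, hv, hmul, hinv, horigin, cross; simpl; field. Qed.

Definition loopv (s1 s2 : H3) (D : R) : list (R * R) :=
  if Rle_dec 0 D then lp4 (sqrt (Rabs D / cross s1 s2)) s1 s2
  else lp4 (sqrt (Rabs D / cross s1 s2)) s2 s1.

Lemma lprod_loopv s1 s2 D : cross s1 s2 > 0 -> lprod (loopv s1 s2 D) = mkH 0 0 D.
Proof. intros Hk. unfold loopv.
  assert (Hs : sqrt (Rabs D / cross s1 s2) * sqrt (Rabs D / cross s1 s2) = Rabs D / cross s1 s2).
  { apply sqrt_sqrt. apply Rle_mult_inv_pos. apply Rabs_pos. lra. }
  destruct (Rle_dec 0 D); rewrite lprod_lp4, Hs; f_equal.
  - rewrite Rabs_right by lra. field. lra.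
  - rewrite Rabs_left by lra. replace (cross s2 s1) with (- cross s1 s2) by (unfold cross; ring). field. lra.
Qed.

Lemma plen_lp4 Sg c a b : NGood Sg -> 0 <= c -> In a Sg -> In b Sg -> In (hinv a) Sg -> In (hinv b) Sg ->
  0 <= plen Sg (lp4 c a b) <= 4 * c.
Proof. intros NG Hc H1 H2 H3 H4. unfold plen, lp4; cbn [fold_right fst snd].
  pose proof (normL_gen _ _ _ NG H1 Hc). pose proof (normL_gen _ _ _ NG H2 Hc).
  pose proof (normL_gen _ _ _ NG H3 Hc). pose proof (normL_gen _ _ _ NG H4 Hc).
  pose proof (normL_nonneg Sg (c * hx a) (c * hy a) NG). pose proof (normL_nonneg Sg (c * hx b) (c * hy b) NG).
  pose proof (normL_nonneg Sg (c * hx (hinv a)) (c * hy (hinv a)) NG).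
  pose proof (normL_nonneg Sg (c * hx (hinv b)) (c * hy (hinv b)) NG). lra. Qed.

Lemma plen_loopv Sg s1 s2 D : NGood Sg -> In s1 Sg -> In s2 Sg -> In (hinv s1) Sg -> In (hinv s2) Sg ->
  0 <= plen Sg (loopv s1 s2 D) <= 4 * sqrt (Rabs D / cross s1 s2).
Proof. intros NG H1 H2 H3 H4. unfold loopv. destruct (Rle_dec 0 D); apply plen_lp4; auto; apply sqrt_pos. Qed.

Definition padv (s : H3) (c : R) : list (R * R) :=
  (c * hx s, c * hy s) :: (c * hx (hinv s), c * hy (hinv s)) :: nil.

Lemma lprod_padv s c : lprod (padv s c) = horigin.
Proof. apply H3_ext; unfold lprod, padv, hv, hmul, hinv, horigin; simpl; field. Qed.

Lemma plen_padv Sg s c : NGood Sg -> 0 <= c ->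
  plen Sg (padv s c) = c * (normL Sg (hx s) (hy s) + normL Sg (hx (hinv s)) (hy (hinv s))).
Proof. intros NG Hc. unfold plen, padv; cbn [fold_right fst snd]. rewrite !normL_hom by auto. ring. Qed.

Lemma pad_pos Sg s1 s2 : NGood Sg -> cross s1 s2 > 0 ->
  0 < normL Sg (hx s1) (hy s1) + normL Sg (hx (hinv s1)) (hy (hinv s1)).
Proof. intros NG Hk. pose proof (normL_lower Sg (hx s1) (hy s1) NG).
  pose proof (normL_nonneg Sg (hx (hinv s1)) (hy (hinv s1)) NG). pose proof (Bnd_pos Sg).
  assert (0 < Rabs (hx s1) + Rabs (hy s1)).
  { destruct (Req_dec (hx s1) 0) as [E1|E1]. destruct (Req_dec (hy s1) 0) as [E2|E2].
    unfold cross in Hk. rewrite E1, E2 in Hk. lra.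
    pose proof (Rabs_pos_lt _ E2); pose proof (Rabs_pos (hx s1)); lra.
    pose proof (Rabs_pos_lt _ E1); pose proof (Rabs_pos (hy s1)); lra. }
  assert (0 < (Rabs (hx s1) + Rabs (hy s1)) / Bnd Sg) by (apply Rdiv_lt_0_compat; lra). lra. Qed.

Definition pi (s : H3) : R * R := (hx s, hy s).
Definition zsum (w : list H3) : R := fold_right (fun s a => hz s + a) 0 w.

Lemma word_split w : wprod w = hmul (lprod (map pi w)) (mkH 0 0 (zsum w)).
Proof. induction w as [|s w IH]; simpl.
  - apply H3_ext; unfold hmul, horigin; simpl; ring.
  - rewrite IH. apply H3_ext; unfold hmul, hv, pi; simpl; ring. Qed.

Definition cmax (Sg : list H3) : R := fold_right (fun s a => Rabs (hz s) + a) 0 Sg.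

Lemma cmax_ge Sg s : In s Sg -> Rabs (hz s) <= cmax Sg.
Proof. induction Sg as [|a Sg IH]; simpl; intros H. contradiction.
  assert (0 <= cmax Sg). { clear. induction Sg; simpl. lra. pose proof (Rabs_pos (hz a)); lra. }
  destruct H. subst; lra. pose proof (IH H). pose proof (Rabs_pos (hz a)); lra. Qed.

Lemma cmax_nonneg Sg : 0 <= cmax Sg.
Proof. induction Sg; simpl. lra. pose proof (Rabs_pos (hz a)); lra. Qed.

Lemma zsum_bound Sg w : (forall s, In s w -> In s Sg) -> Rabs (zsum w) <= INR (length w) * cmax Sg.
Proof. induction w as [|s w IH]; intros H. simpl. rewrite Rabs_R0; lra.
  change (zsum (s :: w)) with (hz s + zsum w). change (length (s :: w)) with (S (length w)).
  rewrite S_INR. eapply Rle_trans. apply Rabs_triang.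
  pose proof (cmax_ge Sg s (H s (or_introl eq_refl))). assert (Rabs (zsum w) <= INR (length w) * cmax Sg) by (apply IH; intros; apply H; simpl; auto).
  lra. Qed.

Lemma plen_map_pi Sg w : NGood Sg -> (forall s, In s w -> In s Sg) -> plen Sg (map pi w) <= INR (length w).
Proof. intros NG. induction w as [|s w IH]; intros H. simpl. lra.
  change (plen Sg (map pi (s :: w))) with (normL Sg (hx s) (hy s) + plen Sg (map pi w)).
  change (length (s :: w)) with (S (length w)).
  rewrite S_INR. pose proof (normL_gen Sg s 1 NG (H s (or_introl eq_refl)) ltac:(lra)).
  rewrite !Rmult_1_l in H0. assert (plen Sg (map pi w) <= INR (length w)) by (apply IH; intros; apply H; simpl; auto). lra. Qed.

Lemma plength_nonneg Sg g : NGood Sg -> admissible Sg g -> 0 <= path_length Sg g.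
Proof. intros NG [_ [[M HM] _]]. unfold path_length.
  assert (Hv : length_set Sg g (var_sum Sg g 1 p01)) by (exists 1%nat, p01; split; auto; apply partition_p01).
  pose proof (Rsup_spec (length_set Sg g) (ex_intro _ _ Hv) (ex_intro _ M HM)) as [H1 _].
  pose proof (H1 _ Hv). unfold var_sum in *; simpl in *. pose proof (normL_nonneg Sg (hx (g 1) - hx (g 0)) (hy (g 1) - hy (g 0)) NG).
  lra. Qed.

Definition connected (Sg : list H3) : Prop :=
  forall p q, exists g, admissible Sg g /\ g 0 = p /\ g 1 = q.

Lemma dCC_glb Sg p q : NGood Sg -> connected Sg ->
  is_glb (fun l => exists g, admissible Sg g /\ g 0 = p /\ g 1 = q /\ l = path_length Sg g) (dCC Sg p q).
Proof. intros NG Hc. unfold dCC. apply Rinf_spec with 0.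
  destruct (Hc p q) as [g [A [B C]]]. exists (path_length Sg g), g; auto.
  intros y [g [A [_ [_ ->]]]]. apply plength_nonneg; auto. Qed.

Lemma dCC_le Sg p q g : NGood Sg -> connected Sg -> admissible Sg g -> g 0 = p -> g 1 = q ->
  dCC Sg p q <= path_length Sg g.
Proof. intros NG Hc A B C. apply (glb_le _ _ _ (dCC_glb Sg p q NG Hc)). exists g; auto. Qed.

Lemma dCC_nonneg Sg p q : NGood Sg -> connected Sg -> 0 <= dCC Sg p q.
Proof. intros NG Hc. destruct (dCC_glb Sg p q NG Hc) as [_ H]. apply H.
  intros y [g [A [_ [_ ->]]]]. apply plength_nonneg; auto. Qed.

Lemma dist_le Sg x g y : NGood Sg -> connected Sg -> onpath g y -> dist_to_path Sg x g <= dCC Sg x y.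
Proof. intros NG Hc [t [Ht E]]. unfold dist_to_path.
  assert (G : is_glb (fun d => exists t, 0 <= t <= 1 /\ d = dCC Sg x (g t))
                     (Rinf (fun d => exists t, 0 <= t <= 1 /\ d = dCC Sg x (g t)))).
  { apply Rinf_spec with 0. exists (dCC Sg x (g t)), t; auto.
    intros d [t' [_ ->]]. apply dCC_nonneg; auto. }
  apply (glb_le _ _ _ G). exists t. rewrite E; auto. Qed.

Lemma connected_of Sg s1 s2 : NGood Sg -> cross s1 s2 > 0 -> connected Sg.
Proof. intros NG Hk p q.
  set (v := (hx q - hx p, hy q - hy p)).
  set (D := hz q - hz (hmul p (hv v))).
  exists (plpath p (v :: loopv s1 s2 D)). split; [|split].
  - apply pl_admissible; auto.
  - apply pl_start.
  - rewrite pl_end. simpl. rewrite lprod_loopv by auto. unfold D, v.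
    apply H3_ext; unfold hmul, hv; simpl; ring.
Qed.

Lemma sqrt_bound C0 kap n Dabs : 0 < kap -> 0 <= C0 -> 0 <= Dabs -> Dabs <= INR n * C0 ->
  4 * sqrt (Dabs / kap) <= 4 * sqrt (C0 / kap) * sqrt (INR n).
Proof. intros Hk HC HD HDn. rewrite Rmult_assoc. apply Rmult_le_compat_l. lra.
  rewrite <- sqrt_mult. apply sqrt_le_1_alt.
  replace (C0 / kap * INR n) with ((INR n * C0) / kap) by (field; lra).
  unfold Rdiv. apply Rmult_le_compat_r. apply Rlt_le, Rinv_0_lt_compat; lra. auto.
  apply Rle_mult_inv_pos; lra. apply pos_INR. Qed.

Lemma eps_bound C eps n0 n : 0 <= C -> eps > 0 -> INR n0 * 1 > (C / eps) ^ 2 -> (n0 <= n)%nat ->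
  C * sqrt (INR n) <= eps * INR n.
Proof. intros HC He Hn0 Hn. apply le_INR in Hn.
  assert (Hs : C / eps <= sqrt (INR n)).
  { rewrite <- (sqrt_pow2 (C / eps)) by (apply Rle_mult_inv_pos; lra).
    apply sqrt_le_1_alt. lra. }
  pose proof (sqrt_pos (INR n)).
  assert (C <= eps * sqrt (INR n)).
  { apply (Rmult_le_compat_l eps) in Hs; [|lra]. replace (eps * (C / eps)) with C in Hs by (field; lra). lra. }
  rewrite <- (sqrt_sqrt (INR n)) at 2 by apply pos_INR.
  replace (eps * (sqrt (INR n) * sqrt (INR n))) with ((eps * sqrt (INR n)) * sqrt (INR n)) by ring.
  apply Rmult_le_compat_r; auto. Qed.

Lemma In_firstn {A} i (w : list A) s : In s (firstn i w) -> In s w.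
Proof. intros H. rewrite <- (firstn_skipn i w). apply in_or_app; auto. Qed.

Theorem mainTheorem14 (S : list H3)
  (HSZ : forall s, In s S -> inHZ s)
  (Hsym : forall s, In s S -> In (hinv s) S)
  (Hgen : generates S) :
  exists C : R, forall eps : R, eps > 0 ->
    exists n0 : nat, forall (x : H3) (n : nat),
      inHZ x -> word_length S x n -> (n0 <= n)%nat ->
      forall w : list H3, min_spelling S x w ->
        exists g : R -> H3, lin_tracked S eps w x g /\
          Rabs (path_length S g - INR n) <= C * sqrt (INR n).
Proof.
  destruct (gen_cross S Hgen) as [s1 [s2 [H1 [H2 Hk]]]].
  pose proof (Hsym s1 H1) as H3. pose proof (Hsym s2 H2) as H4.
  pose proof (normL_glb S (gen_nonnil S Hgen) (absorbing S s1 s2 H1 H2 H3 H4 Hk)) as NG.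
  pose proof (connected_of S s1 s2 NG Hk) as Hc.
  pose proof (cmax_nonneg S) as Hcm.
  set (C := 4 * sqrt (cmax S / cross s1 s2)).
  assert (HC : 0 <= C) by (unfold C; pose proof (sqrt_pos (cmax S / cross s1 s2)); lra).
  exists C. intros eps Heps.
  destruct (INR_archimed 1 ((C / eps) ^ 2)) as [n0 Hn0]. lra.
  exists n0. intros x n Hx Hwl Hn w [[Hw Hwx] Hwlw].
  assert (Hlen : length w = n).
  { destruct Hwl as [[w' [Sw' Lw']] Hmin]. destruct Hwlw as [_ Hmin'].
    pose proof (Hmin w (conj Hw Hwx)). pose proof (Hmin' w' Sw'). lia. }
  set (D := zsum w). set (A := plen S (map pi w)).
  set (P0 := normL S (hx s1) (hy s1) + normL S (hx (hinv s1)) (hy (hinv s1))).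
  assert (HP0 : 0 < P0) by (apply (pad_pos S s1 s2); auto).
  assert (HA : A <= INR n) by (rewrite <- Hlen; apply plen_map_pi; auto).
  set (mu := (INR n - A) / P0).
  assert (Hmu : 0 <= mu) by (apply Rle_mult_inv_pos; lra).
  set (vs := map pi w ++ loopv s1 s2 D ++ padv s1 mu).
  exists (plpath horigin vs). split.
  - split; [apply pl_admissible; auto|split; [apply pl_start|split]].
    + rewrite pl_end. unfold vs. rewrite !lprod_app, lprod_loopv, lprod_padv by auto.
      rewrite <- Hwx, word_split. fold D. apply H3_ext; unfold hmul, horigin; simpl; ring.
    + intros i Hi.
      set (Di := zsum (firstn i w)).
      set (yi := lprod (map pi (firstn i w))).
      assert (Hon : onpath (plpath horigin vs) yi).
      { assert (Hi' : (i <= length vs)%nat) by (unfold vs; rewrite !length_app, length_map; lia).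
        pose proof (pl_vertex horigin vs i Hi') as Hv. rewrite hmul_0_l in Hv.
        unfold vs in Hv. rewrite firstn_app, length_map in Hv.
        replace (i - length w)%nat with 0%nat in Hv by lia. simpl in Hv. rewrite app_nil_r, firstn_map in Hv.
        exact Hv. }
      eapply Rle_trans. apply (dist_le S _ _ yi NG Hc Hon).
      eapply Rle_trans. apply (dCC_le S _ _ (plpath (wprod (firstn i w)) (loopv s1 s2 (- Di))) NG Hc).
      apply pl_admissible; auto. apply pl_start.
      rewrite pl_end, lprod_loopv by auto. rewrite word_split. fold Di yi.
      apply H3_ext; unfold hmul; simpl; ring.
      rewrite pl_length by auto.
      eapply Rle_trans. apply plen_loopv; auto.
      eapply Rle_trans. apply (sqrt_bound (cmax S) _ n); try lra. apply Rabs_pos.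
      rewrite Rabs_Ropp. eapply Rle_trans. apply zsum_bound. intros s Hs. apply Hw. eapply In_firstn; eauto.
      apply Rmult_le_compat_r; auto. apply le_INR. rewrite <- Hlen. rewrite length_firstn; lia.
      fold C. rewrite Hlen. eapply eps_bound; eauto.
  - rewrite pl_length by auto. unfold vs. rewrite !plen_app, plen_padv by auto. fold A P0.
    replace (mu * P0) with (INR n - A) by (unfold mu; field; lra).
    pose proof (plen_loopv S s1 s2 D NG H1 H2 H3 H4) as [L1 L2].
    replace (A + (plen S (loopv s1 s2 D) + (INR n - A)) - INR n) with (plen S (loopv s1 s2 D)) by ring.
    rewrite Rabs_right by lra. eapply Rle_trans. apply L2.
    apply (sqrt_bound (cmax S) _ n); try lra. apply Rabs_pos.
    rewrite <- Hlen. apply zsum_bound; auto.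
Qed.
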